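(* Let $V$ be a finite set of variables, let $x,y,a,b\in V$ with $x\ne y$, $a\ne b$, let $\mathbf Z\subseteq V\setminus\{x,y\}$, $\mathbf X\subseteq V\setminus\{a,b\}$, let $\sigma\in\{\text{preferred},\text{stable}\}$, and let $D^{xy\mathbf Z}_{\mathit{csl}}$ be the extended causal ABA framework defined in the context. For every $S\in\sigma(D^{xy\mathbf Z}_{\mathit{csl}})$: $(a\perp\!\!\!\perp b\mid\mathbf X)\in S$ if and only if $a$ and $b$ are d-separated given $\mathbf X$ in $G(S)=(V,\{(u,v)\mid\mathit{arr}_{uv}\in S\})$.
   Context: ABA. An ABA framework is $D=(\mathcal L,\mathcal R,\mathcal A,\overline{\cdot})$ with sentences $\mathcal L$, rules $a_0\leftarrow a_1,\dots,a_n$ ($n\ge0$), assumptions $\mathcal A\subseteq\mathcal L$ and contrary function $\overline{\cdot}:\mathcal A\to\mathcal L$. $S\vdash q$ ($S\subseteq\mathcal A$) if there is a finite rooted labelled tree with root $q$, set of leaf labels $S$ or $S\cup\{\top\}$, and every inner node labelled by the head of a rule whose children are labelled by the distinct body elements (one child $\top$ for an empty body). $S$ attacks $T$ if some $S'\subseteq S$ derives $\overline a$ for some $a\in T$. $S$ is closed if $S\vdash a$ with $a\in\mathcal A$ implies $a\in S$. Conflict-free: does not attack itself; $S$ defends $T$ if it attacks every attacker of $T$; admissible: conflict-free and self-defending; complete: admissible and contains every assumption set it defends; preferred: $\subseteq$-maximal complete; stable: admissible and attacks $\{a\}$ for every assumption $a\notin S$. Since the framework below is non-flat, extensions are required to be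 closed. Graphs. A path is a sequence of distinct nodes with consecutive nodes adjacent; an inner node $x_i$ of $x_1\dots x_n$ is a collider if $(x_{i-1},x_i)$ and $(x_{i+1},x_i)$ are edges; descendants are nodes reachable by directed paths. For $\mathbf Z\subseteq V\setminus\{x,y\}$, an $x$-$y$-path is $\mathbf Z$-active if every collider on it is in $\mathbf Z$ or has a descendant in $\mathbf Z$ and every other node on it is not in $\mathbf Z$; $x,y$ are d-separated given $\mathbf Z$ if no $\mathbf Z$-active $x$-$y$-path exists. An $x$-$y$-collider-tree of a DAG $H$ is a subgraph $t$ of $H$ with an $x$-$y$-path $p_t$ in $t$ such that every node of $t$ not on $p_t$ is a descendant of a collider of $p_t$; it is $\mathbf Z$-active if $p_t$ is $\mathbf Z$-active in $(V,\text{edges of }t)$. By an $x$-$y$-path over $V$ (without reference to a graph) we mean a sequence of distinct variables from $x$ to $y$. The framework $D_{\mathit{ds}}$. Assumptions: $\mathit{arr}_{uv}$ for all ordered pairs of distinct $u,v\in V$; one $\mathit{noe}_{uv}=\mathit{noe}_{vu}$ per unordered pair; independence assumptions $(u\perp\!\!\!\perp v\mid\mathbf W)$ for $\mathbf W\subseteq V$, distinct $u,v\in V\setminus\mathbf W$ (symmetric in $u,v$). Each assumption $a$ has its own distinct fresh contrary $\overline a$. Rules: (i) $\overline a\leftarrow b$ for distinct $a,b\in\{\mathit{arr}_{uv},\mathit{arr}_{vu},\mathit{noe}_{uv}\}$; (ii) for every sequence $x_1\dots x_k$ with consecutive elements distinct and $x_1=x_k$ and every $1\le i<k$: $\overline{\mathit{arr}_{x_ix_{i+1}}}\leftarrow\mathit{arr}_{x_1x_2},\dots,\mathit{arr}_{x_{k-1}x_k}$;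 (iii) $\mathit{dpath}_{uv}\leftarrow\mathit{arr}_{uv}$; $\mathit{dpath}_{uw}\leftarrow\mathit{dpath}_{uv},\mathit{arr}_{vw}$; $e_{uv}\leftarrow\mathit{arr}_{uv}$; $e_{uv}\leftarrow\mathit{arr}_{vu}$; $\overline{\mathit{noe}_{uv}}\leftarrow e_{uv}$; (iv) for all distinct $u,v$, $\mathbf W\subseteq V\setminus\{u,v\}$ and every $\mathbf W$-active $u$-$v$-collider-tree $t$ (of any DAG on $V$), $\overline{(u\perp\!\!\!\perp v\mid\mathbf W)}\leftarrow\{\mathit{arr}_{st}\mid(s,t)\text{ an edge of }t\}$. The framework $D^{xy\mathbf Z}_{\mathit{csl}}$. Its assumptions are those of $D_{\mathit{ds}}$ together with assumptions $\mathit{bp}_{p\mid\mathbf W}$ for every $u$-$v$-path $p$ over $V$ and every $\mathbf W\subseteq V\setminus\{u,v\}$, with contrary $\overline{\mathit{bp}_{p\mid\mathbf W}}=\mathit{ap}_{p\mid\mathbf W}$. Its rules are those of $D_{\mathit{ds}}$ plus: (a) $(x\perp\!\!\!\perp y\mid\mathbf Z)\leftarrow\mathit{bp}_{p_1\mid\mathbf Z},\dots,\mathit{bp}_{p_k\mid\mathbf Z}$ where $p_1,\dots,p_k$ are all $x$-$y$-paths over $V$; (b) for every $\mathbf Z$-active $x$-$y$-collider-tree $t$ (of any DAG on $V$) with underlying path $p_t$, the rule $\mathit{ap}_{p_t\mid\mathbf Z}\leftarrow\{\mathit{arr}_{st}\mid(s,t)\text{ an edge of }t\}$; (c) the fact $\overline{(x\perp\!\!\!\perp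 y\mid\mathbf Z)}\leftarrow$ (empty body). *)

(* Defs.v *)
From mathcomp Require Import all_boot.
Set Implicit Arguments. Unset Strict Implicit. Unset Printing Implicit Defensive.

(* Generic ABA frameworks.  Sentences: a type L; sets of sentences are  *)
(* predicates L -> Prop.  A rule is a head together with its body,     *)
(* given as a set of sentences (all bodies used below are finite).     *)
Record ABA (L : Type) := mkABA {
  rule : L -> (L -> Prop) -> Prop;
  asm : L -> Prop;
  contrary : L -> L }.

Section ABASemantics.
Variables (L : Type) (D : ABA L).

Definition subsetP (S T : L -> Prop) := forall q, S q -> T q.
Definition asm_set (S : L -> Prop) := subsetP S (asm D).

(* derives S q  <=>  some S' ⊆ S has a finite derivation tree of q whose  *)
(* leaves are labelled by S' (or by S' ∪ {⊤}).                           *)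
Inductive derives (S : L -> Prop) : L -> Prop :=
| der_leaf q : S q -> derives S q
| der_rule q (B : L -> Prop) : rule D q B -> (forall b, B b -> derives S b) -> derives S q.

Definition attacks (S T : L -> Prop) := exists a, T a /\ derives S (contrary D a).
Definition closed (S : L -> Prop) := forall a, asm D a -> derives S a -> S a.
Definition conflict_free (S : L -> Prop) := ~ attacks S S.
Definition defends (S T : L -> Prop) :=
  forall U, asm_set U -> attacks U T -> attacks S U.
Definition admissible (S : L -> Prop) :=
  asm_set S /\ conflict_free S /\ defends S S.
Definition complete (S : L -> Prop) :=
  closed S /\ admissible S /\ (forall T, asm_set T -> defends S T -> subsetP T S).
Definition preferred (S : L -> Prop) :=
  complete S /\ (forall S', complete S' -> subsetP S S' -> subsetP S' S).
Definition stable (S : L -> Prop) :=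
  closed S /\ admissible S /\
  (forall a, asm D a -> ~ S a -> attacks S (fun q => q = a)).
End ABASemantics.

Inductive semantics := Preferred | Stable.
Definition extension (L : Type) (D : ABA L) (sg : semantics) (S : L -> Prop) :=
  match sg with Preferred => preferred D S | Stable => stable D S end.

Section Graphs.
Variable V : finType.
Implicit Types (E : V -> V -> Prop) (p : seq V) (Z : {set V}).

Inductive reach E : V -> V -> Prop :=
| reach_refl u : reach E u u
| reach_step u v w : E u v -> reach E v w -> reach E u w.

Definition path_over (x y : V) p := exists q, p = x :: q /\ last x q = y /\ uniq p.

Fixpoint adj_chain E p : Prop :=
  match p with
  | u :: ((v :: _) as q) => (E u v \/ E v u) /\ adj_chain E q
  | _ => True
  end.

Definition gpath E (x y : V) p := path_over x y p /\ adj_chain E p.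

Definition collider E p (i : nat) (d : V) :=
  (0 < i < (size p).-1)%N /\ E (nth d p i.-1) (nth d p i) /\ E (nth d p i.+1) (nth d p i).

Definition active E Z p (d : V) :=
  forall i, (i < size p)%N ->
    (collider E p i d ->
       (nth d p i \in Z \/ exists w, reach E (nth d p i) w /\ w \in Z)) /\
    (~ collider E p i d -> nth d p i \notin Z).

Definition dsep E (x y : V) Z := ~ exists p, gpath E x y p /\ active E Z p x.

(* x-y-collider-tree t (edge relation Et) with underlying path p, t being a
   subgraph of some DAG on V (equivalently, t itself is acyclic). *)
Definition collider_tree (Et : V -> V -> Prop) (x y : V) p :=
  (forall u v, Et u v -> ~ reach Et v u) /\
  gpath Et x y p /\
  (forall u v, Et u v -> forall w, (w = u \/ w = v) -> w \notin p ->
     exists i, collider Et p i x /\ reach Et (nth x p i) w).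

Definition active_ctree (Et : V -> V -> Prop) (x y : V) p Z :=
  collider_tree Et x y p /\ active Et Z p x.
End Graphs.

(* Noe s and Ind s W take the unordered pair s = [set u; v].           *)
Inductive sent (V : finType) :=
| Arr (u v : V)
| Noe (s : {set V})
| Ind (s : {set V}) (W : {set V})
| Bp (p : seq V) (W : {set V})
| Ap (p : seq V) (W : {set V})
| Dpath (u v : V)
| Edge (u v : V)
| Ctr (a : sent V).

Section Frameworks.
Variable V : finType.

Definition noe (u v : V) := Noe [set u; v].
Definition indep (u v : V) (W : {set V}) := Ind [set u; v] W.

Definition arrows (Et : V -> V -> Prop) : sent V -> Prop :=
  fun s => exists u v, Et u v /\ s = Arr u v.

Inductive ds_rule : sent V -> (sent V -> Prop) -> Prop :=
| r_i1 u v : u != v -> ds_rule (Ctr (Arr u v)) (fun s => s = Arr v u)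
| r_i2 u v : u != v -> ds_rule (Ctr (Arr u v)) (fun s => s = noe u v)
| r_i3 u v : u != v -> ds_rule (Ctr (noe u v)) (fun s => s = Arr u v)
(* (ii): x1 :: q = x_1 ... x_k, consecutive distinct, x_1 = x_k *)
| r_ii (x1 : V) (q : seq V) (i : nat) :
    path (fun a b => a != b) x1 q -> last x1 q = x1 -> (i < size q)%N ->
    ds_rule (Ctr (Arr (nth x1 (x1 :: q) i) (nth x1 (x1 :: q) i.+1)))
            (fun s => exists2 j, (j < size q)%N &
                        s = Arr (nth x1 (x1 :: q) j) (nth x1 (x1 :: q) j.+1))
| r_dp1 u v : ds_rule (Dpath u v) (fun s => s = Arr u v)
| r_dp2 u v w : ds_rule (Dpath u w) (fun s => s = Dpath u v \/ s = Arr v w)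
| r_e1 u v : ds_rule (Edge u v) (fun s => s = Arr u v)
| r_e2 u v : ds_rule (Edge u v) (fun s => s = Arr v u)
| r_noe u v : ds_rule (Ctr (noe u v)) (fun s => s = Edge u v)
| r_iv u v (W : {set V}) (Et : V -> V -> Prop) (p : seq V) :
    u != v -> u \notin W -> v \notin W -> active_ctree Et u v p W ->
    ds_rule (Ctr (indep u v W)) (arrows Et).

Definition ds_asm (s : sent V) : Prop :=
  (exists u v, u != v /\ s = Arr u v) \/
  (exists u v, u != v /\ s = noe u v) \/
  (exists u v (W : {set V}), [/\ u != v, u \notin W, v \notin W & s = indep u v W]).

Definition D_ds : ABA (sent V) := mkABA ds_rule ds_asm (@Ctr V).

Section Csl.
Variables (x y : V) (Z : {set V}).

Inductive csl_rule : sent V -> (sent V -> Prop) -> Prop :=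
| c_ds h B : ds_rule h B -> csl_rule h B
| c_a : csl_rule (indep x y Z) (fun s => exists2 p, path_over x y p & s = Bp p Z)
| c_b (Et : V -> V -> Prop) (p : seq V) :
    active_ctree Et x y p Z -> csl_rule (Ap p Z) (arrows Et)
| c_c : csl_rule (Ctr (indep x y Z)) (fun _ => False).

Definition csl_asm (s : sent V) : Prop :=
  ds_asm s \/
  (exists u v (p : seq V) (W : {set V}), [/\ u != v, path_over u v p, u \notin W, v \notin W & s = Bp p W]).

Definition csl_contrary (s : sent V) : sent V :=
  match s with Bp p W => Ap p W | _ => Ctr s end.

Definition D_csl : ABA (sent V) := mkABA csl_rule csl_asm csl_contrary.
End Csl.

Definition G_of (S : sent V -> Prop) : V -> V -> Prop := fun u v => S (Arr u v).
End Frameworks.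

(* Main.v *)
Require Import Defs.
From mathcomp Require Import all_boot.
From mathcomp Require Import zify.
From Stdlib Require Import Classical.
Set Implicit Arguments. Unset Strict Implicit. Unset Printing Implicit Defensive.

Section GraphLemmas.
Variable V : finType.
Implicit Types (E F : V -> V -> Prop) (p q : seq V) (Z : {set V}).

Lemma reach_trans E a b c : reach E a b -> reach E b c -> reach E a c.
Proof. elim=> [//|u v w Euv _ IH] H; apply: reach_step Euv (IH H). Qed.

Lemma reach_snoc E a b c : reach E a b -> E b c -> reach E a c.
Proof. move=> H Ebc; apply: reach_trans H (reach_step Ebc (reach_refl _ _)). Qed.

Lemma reach_mono E F a b : (forall u v, E u v -> F u v) -> reach E a b -> reach F a b.
Proof. move=> sub; elim=> [u|u v w Euv _ IH]; [exact: reach_refl | exact: reach_step (sub _ _ Euv) IH]. Qed.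

Definition walk E (d : V) v q := forall j, j < size q -> E (nth d (v :: q) j) (nth d q j).

Lemma walk_of_reach E d v u : reach E v u -> exists q, last v q = u /\ walk E d v q.
Proof.
elim=> [w|a b c Eab _ [q [Hl Hw]]]; first by exists [::]; split=> // j.
exists (b :: q); split=> //= -[|j] /= Hj; first exact: Eab.
exact: Hw.
Qed.

Lemma walk_reach E d v q : walk E d v q -> forall j k, j <= k -> k <= size q ->
  reach E (nth d (v :: q) j) (nth d (v :: q) k).
Proof.
move=> Hw j; elim=> [|k IH] Hjk Hk.
  have -> : j = 0 by lia. exact: reach_refl.
case: (ltngtP j k.+1) => [Hlt||Heq]; last (by rewrite Heq; exact: reach_refl); last by lia.
apply: reach_snoc (IH _ _) _; [lia|lia|].
have := Hw k Hk; by [].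
Qed.

Lemma walk_reach_last E d v q : walk E d v q -> reach E v (last v q).
Proof.
move=> Hw; have := walk_reach Hw (leq0n (size q)) (leqnn _).
by rewrite /= -[size q]/((size (v :: q)).-1) nth_last.
Qed.

Lemma adj_chainP E d p : adj_chain E p <-> forall j, j.+1 < size p ->
  E (nth d p j) (nth d p j.+1) \/ E (nth d p j.+1) (nth d p j).
Proof.
elim: p => [|u [|v r] IH] /=; first by split=> // _ j.
  by split=> // _ j.
split.
  move=> [Huv /IH Hr] [|j] Hj //=. exact: Hr.
move=> H; split; first exact: (H 0).
by apply/IH=> j Hj; apply: (H j.+1).
Qed.

Lemma collider_d E p i d d' : collider E p i d -> collider E p i d'.
Proof.
move=> [Hi [H1 H2]]; have Hs : i.+1 < size p by lia.
split=> //; rewrite !(set_nth_default d d') //; lia.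
Qed.

Lemma active_d E Z p d d' : active E Z p d -> active E Z p d'.
Proof.
move=> H i Hi; have [H1 H2] := H i Hi.
have Heq : nth d' p i = nth d p i by apply: set_nth_default.
rewrite Heq; split.
  by move=> /(collider_d d) /H1.
by move=> Hc; apply: H2 => /(collider_d d').
Qed.

End GraphLemmas.

Section Rev.
Variable V : finType.
Implicit Types (E F : V -> V -> Prop) (p q : seq V) (Z : {set V}).

Lemma path_over_rev (a b : V) p : path_over a b p -> path_over b a (rev p).
Proof.
move=> [q [-> [Hl Hu]]]; case: q Hl Hu => [|c r] /= Hl Hu.
  by subst; exists [::].
have := lastI c r; rewrite Hl => Hcr.
have Hu' : uniq (rev (a :: c :: r)) by rewrite rev_uniq.
rewrite Hcr rev_cons rev_rcons /= in Hu' *.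
exists (rcons (rev (belast c r)) a); split=> //; split; first by rewrite last_rcons.
by [].
Qed.

Lemma adj_chain_rev E p : adj_chain E p -> adj_chain E (rev p).
Proof.
case: p => [//|d p0]; set p := d :: p0 => H.
apply/(adj_chainP _ d) => j; rewrite size_rev => Hj.
have /(adj_chainP _ d) H' := H.
rewrite !nth_rev; try lia.
have -> : size p - j.+1 = (size p - j.+2).+1 by lia.
have [] := H' (size p - j.+2); [lia|by right|by left].
Qed.

Lemma collider_rev1 E p i d : collider E (rev p) i d -> collider E p (size p - i.+1) d.
Proof.
move=> [Hi [H1 H2]]; rewrite size_rev in Hi.
rewrite nth_rev in H1; last lia.
rewrite nth_rev in H1; last lia.
rewrite nth_rev in H2; last lia.
rewrite nth_rev in H2; last lia.
split; first lia.
have -> : (size p - i.+1).-1 = size p - i.+2 by lia.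
have -> : (size p - i.+1).+1 = size p - i.-1.+1 by lia.
by split.
Qed.

Lemma collider_rev2 E p k d : k < size p -> collider E p k d -> collider E (rev p) (size p - k.+1) d.
Proof.
move=> Hk H; have := @collider_rev1 E (rev p) k d; rewrite revK size_rev; apply.
by [].
Qed.

Lemma active_rev E Z p d : active E Z p d -> active E Z (rev p) d.
Proof.
move=> H i; rewrite size_rev => Hi.
have Hk : size p - i.+1 < size p by lia.
have [H1 H2] := H (size p - i.+1) Hk.
rewrite nth_rev //; split.
  by move=> /collider_rev1.
move=> Hn; apply: H2 => /(collider_rev2 Hk).
by have -> : size p - (size p - i.+1).+1 = i by lia.
Qed.

Lemma gpath_rev E a b p : gpath E a b p -> gpath E b a (rev p).
Proof. by move=> [H1 H2]; split; [apply: path_over_rev|apply: adj_chain_rev]. Qed.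

Lemma dsep_sym E a b Z : dsep E a b Z -> dsep E b a Z.
Proof.
move=> H [p [Hp Ha]]; apply: H; exists (rev p); split; first exact: gpath_rev.
exact: (active_d _ (active_rev Ha)).
Qed.
End Rev.

Section Ctree.
Variable V : finType.
Implicit Types (E F : V -> V -> Prop) (p q : seq V) (Z W : {set V}).

Lemma collider_sub E F p i d : (forall u v, E u v -> F u v) -> collider E p i d -> collider F p i d.
Proof. by move=> sub [Hi [H1 H2]]; split=> //; split; apply: sub. Qed.

Lemma collider_adj E F p i d : adj_chain E p -> (forall u v, E u v -> F u v) ->
  (forall u v, F u v -> ~ F v u) -> collider F p i d -> collider E p i d.
Proof.
move=> /(adj_chainP _ d) Hadj sub anti [Hi [H1 H2]]; split=> //; split.
  have Hii : i.-1.+1 = i by lia.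
  have := Hadj i.-1 ltac:(lia); rewrite Hii => -[//|/sub H].
  by case: (anti _ _ H1 H).
have [/sub H|//] := Hadj i ltac:(lia).
by case: (anti _ _ H2 H).
Qed.

Lemma ctree_to_path E Et a b p W : (forall u v, Et u v -> E u v) ->
  (forall u v, E u v -> ~ E v u) -> active_ctree Et a b p W ->
  gpath E a b p /\ active E W p a.
Proof.
move=> sub anti [[Hacyc [[Hpo Hadj] H3]] Hact]; split.
  split=> //; apply/(adj_chainP _ a) => j Hj.
  have /(adj_chainP _ a) := Hadj; move/(_ j Hj) => [] H; [left|right]; exact: sub.
move=> i Hi; have [A1 A2] := Hact i Hi; split.
  move=> /(collider_adj Hadj sub anti) /A1 [|[w [Hr Hw]]]; first by left.
  by right; exists w; split=> //; apply: reach_mono Hr.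
by move=> Hn; apply: A2 => /(collider_sub sub).
Qed.

Lemma path_to_ctree E a b p W : (forall u v, E u v -> ~ reach E v u) ->
  gpath E a b p -> active E W p a ->
  exists Et, active_ctree Et a b p W /\ (forall u v, Et u v -> E u v).
Proof.
move=> acyc [Hpo Hadj] Hact.
have anti : forall u v, E u v -> ~ E v u.
  by move=> u v Euv Evu; apply: (acyc _ _ Euv); apply: reach_step Evu (reach_refl _ _).
pose adjp u v := exists j, j.+1 < size p /\
   ((u = nth a p j /\ v = nth a p j.+1) \/ (v = nth a p j /\ u = nth a p j.+1)).
pose Et u v := E u v /\ (adjp u v \/ exists i, collider E p i a /\ reach E (nth a p i) u).
have sub : forall u v, Et u v -> E u v by move=> u v [].
have HadjEt : adj_chain Et p.
  apply/(adj_chainP _ a) => j Hj.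
  have /(adj_chainP _ a) := Hadj; move/(_ j Hj) => [] H; [left|right]; split=> //; left; exists j;
  split=> //; [left|right]; split=> //.
have colE : forall i, collider E p i a -> collider Et p i a.
  move=> i [Hi [H1 H2]]; split=> //; split; split=> //; left.
    by exists i.-1; split; [lia|left; split=> //; congr nth; lia].
  by exists i; split; [lia|right; split].
have lift : forall i, collider E p i a -> forall s t, reach E s t -> reach E (nth a p i) s ->
    reach Et s t.
  move=> i Hc s t; elim=> [u _|u v w Euv _ IH Hr]; first exact: reach_refl.
  apply: reach_step (IH (reach_snoc Hr Euv)); split=> //; right; exists i; split=> //.
exists Et; split=> //; split.
  split.
    by move=> u v /sub Euv /(reach_mono sub); apply: acyc.
  split; first by split.
  move=> u v [Euv [[j [Hj Hor]]|[i [Hc Hr]]]] w Hw Hwp.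
    exfalso; move: Hwp.
    have [Hu Hv] : u \in p /\ v \in p.
      by case: Hor => [[-> ->]|[-> ->]]; split; apply/mem_nth; rewrite ?Hj ?(ltnW Hj).
    by case: Hw => ->; rewrite ?Hu ?Hv.
  exists i; split; first exact: colE.
  case: Hw => ->; first by apply: lift (reach_refl _ _).
  by apply: lift (reach_snoc Hr Euv) (reach_refl _ _).
move=> i Hi; have [A1 A2] := Hact i Hi; split.
  move=> Hc; have HcE := collider_sub sub Hc.
  have [|[w [Hr Hw]]] := A1 HcE; first by left.
  right; exists w; split=> //.
  exact: (lift i HcE _ _ Hr (reach_refl _ _)).
by move=> Hn; apply: A2 => /colE.
Qed.
End Ctree.

Section F1.
Variable V : finType.
Variables (x y : V) (Z : {set V}).
Notation D := (D_csl x y Z).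
Implicit Types (S T U : sent V -> Prop) (s h q b : sent V).

Lemma der_mono S T q : derives D S q -> (forall s, S s -> T s) -> derives D T q.
Proof.
move=> H sub; elim: H => [q' Sq|q' B r _ IH]; first by apply: der_leaf; auto.
exact: der_rule r IH.
Qed.

Definition norule (h : sent V) := match h with Arr _ _ | Noe _ | Bp _ _ => True | _ => False end.

Lemma rule_head h B : csl_rule x y Z h B -> ~ norule h.
Proof. case=> [h' B' r| |Et p _|] //=; by case: r => * /=; case. Qed.

Lemma der_leafonly S q : derives D S q -> norule q -> S q.
Proof. by case=> // q' B r _ /(rule_head r). Qed.

Definition asm_kind (s : sent V) := match s with Arr _ _ | Noe _ | Ind _ _ | Bp _ _ => True | _ => False end.

Lemma asm_kindP s : csl_asm s -> asm_kind s.
Proof.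
by case=> [[[u [v [_ ->]]]|[[u [v [_ ->]]]|[u [v [W [_ _ _ ->]]]]]]|[u [v [p [W [_ _ _ _ ->]]]]]].
Qed.

Lemma asm_arr (u v : V) : csl_asm (Arr u v) -> u != v.
Proof.
case=> [[[u' [v' [H1 E]]]|[[u' [v' [_ E]]]|[u' [v' [W [_ _ _ E]]]]]]|[u' [v' [p [W [_ _ _ _ E]]]]]];
  try discriminate.
by case: E => -> ->.
Qed.

Lemma asm_noe (s : {set V}) : csl_asm (Noe s) -> exists u v, u != v /\ s = [set u; v].
Proof.
case=> [[[u' [v' [H1 E]]]|[[u' [v' [H1 E]]]|[u' [v' [W [_ _ _ E]]]]]]|[u' [v' [p [W [_ _ _ _ E]]]]]];
  try discriminate.
by case: E => ->; exists u', v'.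
Qed.

Lemma asm_ctr (s : sent V) : ~ csl_asm (Ctr s).
Proof. by move/asm_kindP. Qed.
Lemma asm_ap (p : seq V) W : ~ csl_asm (Ap p W).
Proof. by move/asm_kindP. Qed.
Lemma asm_edge (u v : V) : ~ csl_asm (Edge u v).
Proof. by move/asm_kindP. Qed.

Definition isIB (s : sent V) := match s with Ind _ _ | Bp _ _ => True | _ => False end.

Lemma body_notIB h B b : csl_rule x y Z h B -> ~ isIB h -> B b -> ~ isIB b.
Proof.
case=> [h' B' r| |Et p _|] Hh Bb.
- case: r Bb Hh => [u v _ ->|u v _ ->|u v _ ->|x1 q i _ _ _ [j _ ->]|u v ->|u v w [->|->]|u v ->|u v ->|u v ->|u v W Et p _ _ _ _ [a [c [_ ->]]]] _ /=;
  by case.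
- by case: Hh.
- by case: Bb => [a [c [_ ->]]] /=; case.
- by case: Bb.
Qed.

Lemma der_restrict S T q : derives D S q -> (forall s, S s -> ~ isIB s -> T s) -> ~ isIB q ->
  derives D T q.
Proof.
move=> H sub; elim: H => [q' Sq Hq|q' B r _ IH Hq]; first by apply: der_leaf; auto.
have r2 := r; apply: der_rule r _ => b Bb; apply: IH => //; exact: body_notIB r2 Hq Bb.
Qed.

Lemma set2_eq (u v u' v' : V) : [set u; v] = [set u'; v'] ->
  (u' = u /\ v' = v) \/ (u' = v /\ v' = u).
Proof.
move=> H.
have Hu' : u' \in [set u; v] by rewrite H !inE eqxx.
have Hv' : v' \in [set u; v] by rewrite H !inE eqxx orbT.
have Hu : u \in [set u'; v'] by rewrite -H !inE eqxx.
have Hv : v \in [set u'; v'] by rewrite -H !inE eqxx orbT.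
move: Hu' Hv' Hu Hv; rewrite !inE.
by case/orP=> /eqP ->; case/orP=> /eqP ->; case/orP=> /eqP E1; case/orP=> /eqP E2; subst; auto.
Qed.

End F1.

Section F2.
Variable V : finType.
Variables (x y : V) (Z : {set V}).
Notation D := (D_csl x y Z).
Implicit Types (S T U : sent V -> Prop) (s h q b : sent V).
Definition asmset S := forall s, S s -> csl_asm s.

Lemma der_arr S (u v : V) : derives D S (Arr u v) -> S (Arr u v).
Proof. by move/der_leafonly; apply. Qed.

Lemma der_edge S (u v : V) : asmset S -> derives D S (Edge u v) -> S (Arr u v) \/ S (Arr v u).
Proof.
move=> HS H; inversion H; subst.
  by case: (asm_edge (HS _ H0)).
inversion H0; subst. inversion H2; subst.
  by left; apply: der_arr; apply: H1.
by right; apply: der_arr; apply: H1.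
Qed.

Lemma der_ctr_noe S (s0 : {set V}) : asmset S -> derives D S (Ctr (Noe s0)) ->
  exists u v, s0 = [set u; v] /\ S (Arr u v).
Proof.
move=> HS H; inversion H; subst.
  by case: (asm_ctr (HS _ H0)).
inversion H0; subst. inversion H2; subst.
  by exists u, v; split=> //; apply: der_arr; apply: H1.
have [] := der_edge HS (H1 _ erefl) => ?; first by exists u, v.
by exists v, u; rewrite /noe setUC.
Qed.


Lemma nth_size_last (d x1 : V) (q : seq V) : nth d (x1 :: q) (size q) = last x1 q.
Proof. by rewrite -[size q]/((size (x1 :: q)).-1) nth_last. Qed.

Lemma der_ctr_arr S (u v : V) : asmset S -> derives D S (Ctr (Arr u v)) ->
  S (Arr v u) \/ S (noe u v) \/ (S (Arr u v) /\ reach (G_of S) v u).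
Proof.
move=> HS H; inversion H; subst.
  by case: (asm_ctr (HS _ H0)).
inversion H0; subst. inversion H2; subst.
- by left; apply: der_arr; apply: H1.
- by right; left; apply: der_leafonly (H1 _ erefl) _.
- right; right.
  have Hw : walk (G_of S) x1 x1 q.
    move=> j Hj; apply: der_arr; apply: H1; by exists j.
  split; first by apply: der_arr; apply: H1; exists i.
  apply: reach_trans (_ : reach _ _ x1) _.
    by have := walk_reach Hw H8 (leqnn _); rewrite nth_size_last H6.
  exact: (walk_reach Hw (leq0n i) (ltnW H8)).
Qed.

Lemma cycle_attack (E : V -> V -> Prop) (u v : V) : (forall a c, E a c -> a != c) -> E u v -> reach E v u ->
  exists U, (forall s, U s -> exists a c, E a c /\ s = Arr a c) /\ U (Arr u v) /\
    (forall a c, U (Arr a c) -> derives D U (Ctr (Arr a c))) /\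
    (forall F : V -> V -> Prop, (forall a c, U (Arr a c) -> F a c) -> reach F v u).
Proof.
move=> irr Euv /(walk_of_reach u) [q [Hl Hw]].
pose qq := v :: q.
have Hw2 : walk E u u qq by move=> [|j] Hj //=; apply: Hw.
have Hp : path (fun a0 b0 : V => a0 != b0) u qq by apply/(pathP u) => j Hj; apply: irr; apply: Hw2.
have Hlast : last u qq = u by [].
pose U := fun s => exists2 j, j < size qq & s = Arr (nth u (u :: qq) j) (nth u (u :: qq) j.+1).
exists U; split; [|split; [|split]].
- by move=> s [j Hj ->]; do 2 eexists; split; [apply: (Hw2 j Hj)|].
- by exists 0.
- move=> a c [j Hj E1]; case: E1 => -> ->.
  apply: (der_rule (B := U)); first by apply: c_ds; apply: r_ii.
  by move=> b Ub; apply: der_leaf.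
- move=> F HF; rewrite -Hl; apply: walk_reach_last => j Hj.
  apply: HF; exists j.+1 => //.
Qed.

Lemma cf_acyclic S : asmset S -> conflict_free D S -> forall u v, G_of S u v -> ~ reach (G_of S) v u.
Proof.
move=> HS Hcf u v Huv Hr.
have [U [HU1 [HU2 [HU3 _]]]] := cycle_attack (fun a c (H : G_of S a c) => asm_arr (HS _ H)) Huv Hr.
apply: Hcf; exists (Arr u v); split=> //.
apply: der_mono (HU3 _ _ HU2) _ => s /HU1 [a [c [Hac ->]]]; exact: Hac.
Qed.

End F2.

Section F3.
Variable V : finType.
Variables (x y : V) (Z : {set V}).
Notation D := (D_csl x y Z).
Implicit Types (S T U : sent V -> Prop) (s h q b : sent V).

Lemma der_ctr_ind S (s0 W : {set V}) : asmset S -> derives D S (Ctr (Ind s0 W)) ->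
  (exists u v Et p, [/\ u != v, u \notin W, v \notin W & s0 = [set u; v]] /\
     active_ctree Et u v p W /\ forall a c, Et a c -> S (Arr a c)) \/ (s0 = [set x; y] /\ W = Z).
Proof.
move=> HS H; inversion H; subst.
  by case: (asm_ctr (HS _ H0)).
inversion H0; subst.
  inversion H2; subst.
  left; exists u, v, Et, p; split=> //; split=> // a c Hac; apply: der_arr; apply: H1.
  by exists a, c.
by right.
Qed.

Lemma der_ap S (p : seq V) (W : {set V}) : asmset S -> derives D S (Ap p W) ->
  exists Et, W = Z /\ active_ctree Et x y p Z /\ forall a c, Et a c -> S (Arr a c).
Proof.
move=> HS H; inversion H; subst.
  by case: (asm_ap (HS _ H0)).
inversion H0; subst.
  by inversion H2.
exists Et; split=> //; split=> // a c Hac; apply: der_arr; apply: H1.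
by exists a, c.
Qed.

Lemma der_ind S (s0 W : {set V}) : derives D S (Ind s0 W) ->
  S (Ind s0 W) \/ (s0 = [set x; y] /\ W = Z /\ forall p, path_over x y p -> S (Bp p Z)).
Proof.
move=> H; inversion H; subst; first by left.
inversion H0; subst.
  by inversion H2.
right; split=> //; split=> // p Hp; apply: der_leafonly => //; apply: H1.
by exists p.
Qed.

End F3.

Section F4.
Variable V : finType.
Variables (x y : V) (Z : {set V}).
Notation D := (D_csl x y Z).
Implicit Types (S T U : sent V -> Prop) (s h q b : sent V).
Variable G : V -> V -> Prop.
Hypothesis Hacyc : forall u v, G u v -> ~ reach G v u.
Hypothesis Hconn : exists Et p, active_ctree Et x y p Z /\ forall a c, Et a c -> G a c.

Definition AG s := (exists u v, G u v /\ s = Arr u v) \/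
  (exists u v, [/\ u != v, ~ G u v, ~ G v u & s = noe u v]).
Definition SG s := csl_asm s /\ ~ derives D AG (csl_contrary s).

Lemma G_irr u v : G u v -> u != v.
Proof. by move=> H; apply/eqP=> E; subst; apply: (Hacyc H); apply: reach_refl. Qed.

Lemma AG_arr u v : AG (Arr u v) -> G u v.
Proof. by case=> [[u' [v' [H [-> ->]]]]|[u' [v' [_ _ _ //]]]]. Qed.

Lemma AG_noe (s0 : {set V}) : AG (Noe s0) -> exists u v, [/\ u != v, ~ G u v, ~ G v u & s0 = [set u; v]].
Proof. case=> [[u' [v' [_ //]]]|[u' [v' [H1 H2 H3 [->]]]]]; by exists u', v'. Qed.

Lemma AG_asm : asmset AG.
Proof.
move=> s [[u [v [H ->]]]|[u [v [H1 H2 H3 ->]]]]; left.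
  by left; exists u, v; split=> //; apply: G_irr.
by right; left; exists u, v.
Qed.

Lemma noe_G u v u' v' : [set u; v] = [set u'; v'] -> ~ G u' v' -> ~ G v' u' -> G u v -> False.
Proof. by move=> /set2_eq [[-> ->]|[-> ->]] H1 H2 H. Qed.

Lemma AG_cf e : AG e -> ~ derives D AG (csl_contrary e).
Proof.
case=> [[u [v [H ->]]]|[u [v [H1 H2 H3 ->]]]] /= Hd.
  case: (der_ctr_arr AG_asm Hd) => [/AG_arr Hvu|[/AG_noe [u' [v' [_ H2 H3 E]]]|[_ Hr]]].
  - by apply: (Hacyc H); apply: reach_step Hvu (reach_refl _ _).
  - exact: noe_G E H2 H3 H.
  - by apply: (Hacyc H); apply: reach_mono Hr => a c /AG_arr.
have [u' [v' [E /AG_arr H]]] := der_ctr_noe AG_asm Hd.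
have [[E1 E2]|[E1 E2]] := set2_eq E; subst; [exact: H2 | exact: H3].
Qed.

Lemma full s : csl_asm s -> ~ isIB s -> ~ AG s -> derives D AG (csl_contrary s).
Proof.
move=> Ha; have := asm_kindP Ha.
case: s Ha => [u v|s0|s0 W|p W|p W|u v|u v|s0] Ha Hk Hib HA //=; try by case: Hib.
  have Huv := asm_arr Ha.
  have nG : ~ G u v by move=> H; apply: HA; left; exists u, v.
  case: (classic (G v u)) => Hvu.
    apply: (der_rule (B := fun s => s = Arr v u)); first by apply: c_ds; apply: r_i1.
    by move=> b ->; apply: der_leaf; left; exists v, u.
  apply: (der_rule (B := fun s => s = noe u v)); first by apply: c_ds; apply: r_i2.
  by move=> b ->; apply: der_leaf; right; exists u, v.
have [u [v [Huv E]]] := asm_noe Ha; subst s0.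
case: (classic (G u v)) => Guv.
  apply: (der_rule (B := fun s => s = Arr u v)); first by apply: c_ds; apply: r_i3.
  by move=> b ->; apply: der_leaf; left; exists u, v.
case: (classic (G v u)) => Gvu.
  have -> : [set u; v] = [set v; u] by rewrite setUC.
  apply: (der_rule (B := fun s => s = Arr v u)); first by apply: c_ds; apply: r_i3; rewrite eq_sym.
  by move=> b ->; apply: der_leaf; left; exists v, u.
by exfalso; apply: HA; right; exists u, v; split.
Qed.

Lemma SG_AN s : SG s -> ~ isIB s -> AG s.
Proof.
move=> [Ha Hn] Hib; apply: NNPP => HA; exact: Hn (full Ha Hib HA).
Qed.

Lemma AG_SG s : AG s -> SG s.
Proof. by move=> H; split; [apply: AG_asm|apply: AG_cf]. Qed.

Lemma contr_notIB s : ~ isIB (csl_contrary s).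
Proof. by case: s => * /=; case. Qed.

Lemma der_SG_AG s : derives D SG (csl_contrary s) -> derives D AG (csl_contrary s).
Proof. move=> H; refine (der_restrict (T := AG) H _ (@contr_notIB s)) => s' Hs' Hib; exact: SG_AN. Qed.

Lemma SG_complete : complete D SG.
Proof.
split; [|split; [split; [|split]|]].
- move=> a /= Ha Hd; have := asm_kindP Ha; case: a Ha Hd => // [u v|s0|s0 W|p W] Ha Hd _;
    try by apply: der_leafonly Hd _.
  case: (der_ind Hd) => [//|[E1 [E2 Hbp]]]; subst.
  have [Et [p0 [Hct Hsub]]] := Hconn.
  have Hpo : path_over x y p0 by case: Hct => [[_ [[]]]].
  have [_ Hn] := Hbp _ Hpo; exfalso; apply: Hn => /=.
  apply: (der_rule (B := arrows Et)); first by apply: c_b.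
  by move=> b [a [c [Hac ->]]]; apply: der_leaf; left; exists a, c; split=> //; apply: Hsub.
- by move=> s [].
- move=> [a [SGa Hd]]; exact: (proj2 SGa) (der_SG_AG Hd).
- move=> U HU [a [SGa Hd]]; apply: NNPP => Hna.
  have sub : forall s, U s -> ~ isIB s -> AG s.
    move=> s Us Hib; apply: NNPP => HA; apply: Hna; exists s; split=> //.
    by apply: der_mono (full (HU _ Us) Hib HA) _ => s' /AG_SG.
  exact: (proj2 SGa) (der_restrict Hd sub (@contr_notIB a)).
- move=> T HT Hdef a Ta; split; first exact: HT.
  move=> Hd.
  have [e [AGe He]] := Hdef AG AG_asm (ex_intro _ a (conj Ta Hd)).
  exact: AG_cf AGe (der_SG_AG He).
Qed.

End F4.

Section F5.
Variable V : finType.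
Variables (x y : V) (Z : {set V}).
Notation D := (D_csl x y Z).
Implicit Types (S T U : sent V -> Prop) (s h q b : sent V).
Hypothesis Hxy : x != y.
Hypothesis Hx : x \notin Z.
Hypothesis Hy : y \notin Z.

Lemma indep_asm (a b : V) (X : {set V}) : a != b -> a \notin X -> b \notin X -> csl_asm (indep a b X).
Proof. by move=> *; left; right; right; exists a, b, X; split. Qed.

Lemma der_ctr_xyZ S : derives D S (Ctr (indep x y Z)).
Proof. by apply: (der_rule (B := fun _ => False)); first exact: c_c. Qed.

Lemma not_all_bp S : Defs.closed D S -> conflict_free D S ->
  exists p, path_over x y p /\ ~ S (Bp p Z).
Proof.
move=> Hcl Hcf; apply: NNPP => Hn.
have Hall : forall p, path_over x y p -> S (Bp p Z).
  by move=> p Hp; apply: NNPP => Hnp; apply: Hn; exists p.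
have Hi : S (indep x y Z).
  apply: Hcl; first exact: indep_asm.
  apply: (der_rule (B := fun s => exists2 p, path_over x y p & s = Bp p Z)); first exact: c_a.
  by move=> b [p Hp ->]; apply: der_leaf; apply: Hall.
by apply: Hcf; exists (indep x y Z); split=> //; apply: der_ctr_xyZ.
Qed.

Lemma bp_asm p : path_over x y p -> csl_asm (Bp p Z).
Proof. by move=> Hp; right; exists x, y, p, Z; split. Qed.

Lemma pref_star S : preferred D S -> forall a, csl_asm a -> ~ S a -> derives D S (csl_contrary a).
Proof.
move=> [[Hcl [[Has [Hcf Hdef]] Hcomp]] Hmax].
have Has' : asmset S := Has.
have [p0 [Et [Hct HEt]]] : exists p Et, active_ctree Et x y p Z /\
    forall u v, Et u v -> ~ derives D S (Ctr (Arr u v)).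
  pose T := fun s => exists2 p, path_over x y p & s = Bp p Z.
  have HnT : ~ defends D S T.
    move=> HT.
    have HTa : asm_set D T by move=> s [p Hp ->]; apply: bp_asm.
    have HTS := Hcomp T HTa HT.
    have [p [Hp Hnp]] := not_all_bp Hcl Hcf.
    by apply: Hnp; apply: HTS; exists p.
  have [U HU] := not_all_ex_not _ _ HnT.
  have [HUa HU'] := imply_to_and _ _ HU.
  have [HUt HnS] := imply_to_and _ _ HU'.
  have [s [[p Hp ->] Hd]] := HUt.
  have [Et [_ [Hct Hsub]]] := der_ap HUa Hd.
  exists p, Et; split=> // u v Huv Hd'; apply: HnS.
  by exists (Arr u v); split=> //; apply: Hsub.
pose G u v := S (Arr u v) \/ Et u v.
have Etacyc : forall u v, Et u v -> ~ reach Et v u by case: Hct => [[]].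
have Girr : forall u v, G u v -> u != v.
  move=> u v [H|H]; first exact: asm_arr (Has' _ H).
  by apply/eqP=> E; subst; apply: (Etacyc _ _ H); apply: reach_refl.
have Gacyc : forall u v, G u v -> ~ reach G v u.
  move=> u v Guv Hr.
  have [U [HU1 [HU2 [HU3 HU4]]]] := cycle_attack x y Z Girr Guv Hr.
  case: (classic (exists a c, U (Arr a c) /\ S (Arr a c))) => [[a [c [Ua Sa]]]|Hno].
    have HUa : asmset U by move=> s /HU1 [a' [c' [Hg ->]]]; left; left; exists a', c'; split=> //; apply: Girr.
    have [e [Ue He]] := Hdef U HUa (ex_intro _ (Arr a c) (conj Sa (HU3 _ _ Ua))).
    have [a' [c' [[Sa'|Ea'] E]]] := HU1 _ Ue; subst e.
      by apply: Hcf; exists (Arr a' c'); split.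
    exact: HEt Ea' He.
  have HUE : forall a c, U (Arr a c) -> Et a c.
    move=> a c Ua; have [a' [c' [[Sa'|Ea'] [E1 E2]]]] := HU1 _ Ua; subst => //.
    by case: Hno; exists a', c'.
  exact: Etacyc _ _ (HUE _ _ HU2) (HU4 _ HUE).
have Gconn : exists Et' p, active_ctree Et' x y p Z /\ forall a c, Et' a c -> G a c.
  by exists Et, p0; split=> // a c H; right.
have Hc := SG_complete Gacyc Gconn.
have HSsub : forall s, S s -> SG x y Z G s.
  move=> s Ss; split; first exact: Has'.
  move=> Hd.
  have [e [AGe He]] := Hdef _ (@AG_asm _ _ Gacyc) (ex_intro _ s (conj Ss Hd)).
  case: AGe => [[u [v [[Suv|Euv] E]]]|[u [v [H1 H2 H3 E]]]]; subst e.
  - by apply: Hcf; exists (Arr u v); split.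
  - exact: HEt Euv He.
  - have [u' [v' [E Sa]]] := der_ctr_noe Has' He.
    by apply: (noe_G (esym E) H2 H3); left.
have HSG := Hmax _ Hc HSsub.
move=> a Ha Hna.
have Hd : derives D (AG G) (csl_contrary a).
  by apply: NNPP => Hnd; apply: Hna; apply: HSG; split.
apply: der_mono Hd _ => s /(AG_SG x y Z Gacyc); exact: HSG.
Qed.

End F5.

Lemma final_common (V : finType) (x y a b : V) (Z X : {set V}) (S : sent V -> Prop) :
  x != y -> a != b -> x \notin Z -> y \notin Z -> a \notin X -> b \notin X ->
  asmset S -> Defs.closed (D_csl x y Z) S -> conflict_free (D_csl x y Z) S ->
  (forall s, csl_asm s -> ~ S s -> derives (D_csl x y Z) S (csl_contrary s)) ->
  (S (indep a b X) <-> dsep (G_of S) a b X).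
Proof.
move=> Hxy Hab Hx Hy Ha Hb Has Hcl Hcf Hstar.
have acyc := cf_acyclic Has Hcf.
have anti : forall u v, G_of S u v -> ~ G_of S v u.
  by move=> u v Huv Hvu; apply: (acyc _ _ Huv); apply: reach_step Hvu (reach_refl _ _).
split.
  move=> Hi [p [Hgp Hact]].
  have [Et [Hct Hsub]] := path_to_ctree acyc Hgp Hact.
  apply: Hcf; exists (indep a b X); split=> //.
  apply: (der_rule (B := arrows Et)); first by apply: c_ds; apply: r_iv Hct.
  by move=> s [u [v [Huv ->]]]; apply: der_leaf; apply: Hsub.
move=> Hds; apply: NNPP => Hni.
have Hd := Hstar _ (indep_asm Hab Ha Hb) Hni.
have conn : forall u v Et p, active_ctree Et u v p X -> (forall s t, Et s t -> S (Arr s t)) ->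
    [set a; b] = [set u; v] -> False.
  move=> u v Et p Hct Hsub E.
  have [Hgp Hact] := ctree_to_path Hsub anti Hct.
  have [[E1 E2]|[E1 E2]] := set2_eq E; subst.
    by apply: Hds; exists p.
  by apply: (dsep_sym Hds); exists p.
case: (der_ctr_ind Has Hd) => [[u [v [Et [p [[_ _ _ E] [Hct Hsub]]]]]]|[E1 E2]].
  exact: conn Hct Hsub E.
subst X.
have [p [Hp Hnp]] := not_all_bp Hxy Hx Hy Hcl Hcf.
have [Et [_ [Hct Hsub]]] := der_ap Has (Hstar _ (bp_asm Hxy Hx Hy Hp) Hnp).
exact: conn Hct Hsub E1.
Qed.

Unset Implicit Arguments.

Theorem proposition5 (V : finType) (x y a b : V) (Z X : {set V}) (sg : semantics) :
  x != y -> a != b ->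
  x \notin Z -> y \notin Z -> a \notin X -> b \notin X ->
  forall S : sent V -> Prop,
    extension (D_csl x y Z) sg S ->
    (S (indep a b X) <-> dsep (G_of S) a b X).
Proof.
move=> Hxy Hab Hx Hy Ha Hb S.
case: sg => /= Hext.
  have Hstar := pref_star Hxy Hx Hy Hext.
  have [[Hcl [[Has [Hcf _]] _]] _] := Hext.
  by apply: (final_common (x:=x) (y:=y) (Z:=Z)).
have [Hcl [[Has [Hcf _]] Hatt]] := Hext.
apply: (final_common (x:=x) (y:=y) (Z:=Z)) => // s Hs Hns.
by have [s' [-> Hd]] := Hatt s Hs Hns.
Qed.
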